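(* Let $s \in \{2,3\}$ and let $C_5 \rtimes_s C_4$ be the group generated by $x, y$ with relations $x^4 = 1$, $y^5 = 1$, $yx = xy^s$; let $H = \langle y \rangle$ and $N_i = x^iH$. Let $S$ be a sequence in $C_5 \rtimes_s C_4$ with $|S| = 7$. If all elements of $S$ belong to one coset $N_i$ with $i \in \{1,3\}$, then $S$ is not free of product-$1$ subsequences.
   Context: A sequence in a finite group $G$ is a finite list of elements of $G$, repetition allowed. A non-empty subsequence $(g_{n_1},\dots,g_{n_k})$ is a product-$1$ subsequence if $g_{\sigma(n_1)}\cdots g_{\sigma(n_k)} = 1$ for some permutation $\sigma$ of $\{n_1,\dots,n_k\}$; $S$ is free of product-$1$ subsequences if it has no such subsequence. *)

(* Defs.v *)
From mathcomp Require Import all_boot all_fingroup.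
Set Implicit Arguments. Unset Strict Implicit. Unset Printing Implicit Defensive.
Local Open Scope group_scope.

(* A sequence S (a list, repetitions allowed) has a product-1 subsequence if
   some non-empty subsequence (selected by a bit mask, so multiplicities are
   respected) can be reordered (perm_eq) so that the ordered product is 1. *)
Definition has_prod1_subseq (gT : finGroupType) (S : seq gT) : Prop :=
  exists (m : bitseq) (T : seq gT),
    mask m S != [::] /\ perm_eq (mask m S) T /\ \prod_(g <- T) g = 1.

Definition prod1_free (gT : finGroupType) (S : seq gT) : Prop :=
  ~ has_prod1_subseq S.

(* Main.v *)
Require Import Defs.
From mathcomp Require Import all_boot all_fingroup.

Fixpoint tupk k n : seq (seq nat) := if n is n'.+1 then [seq a :: l | a <- iota 0 k, l <- tupk k n'] else [:: [::]].
Fixpoint F s i (l : seq nat) := if l is a :: l' then (a * s ^ (i * size l') + F s i l')%N else 0%N.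
Fixpoint f t (l : seq nat) := if l is a :: l' then (a * t ^ size l' + f t l')%N else 0%N.
Definition W t := [seq l <- tupk 5 4 | f t l %% 5 == 0].
Definition C := [seq c <- tupk 8 5 | sumn c == 7].
Definition fits (c l : seq nat) := all (fun x => count_mem x l <= nth 0 c x) (iota 0 5).
Lemma comp : all (fun c => has (fits c) (W 2) && has (fits c) (W 3)) C.
Proof. vm_compute. reflexivity. Qed.

Lemma mem_tup k n l : (l \in tupk k n) = (size l == n) && all (fun a => a < k) l.
Proof.
elim: n l => [|n IH] l /=.
  by case: l.
apply/allpairsP/idP.
  case=> [[b l']] /= [Hb Hl ->]; move: Hb Hl; rewrite mem_iota IH /= add0n.
  by move=> -> /andP[/eqP -> ->]; rewrite eqxx.
case: l => [|a l] //= /andP[Hs /andP [Ha Hl]]; exists (a, l) => /=; split => //.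
  by rewrite mem_iota add0n Ha.
by rewrite IH -eqSS Hs.
Qed.

Lemma F_mod s i l : F s i l = f (s ^ i %% 5) l %[mod 5].
Proof.
elim: l => [|a l IH] //=.
rewrite -modnDm IH modnDm -modnDm -[in RHS]modnDm; congr ((_ + _) %% 5).
by rewrite -modnMmr -[in RHS]modnMmr modnXm expnM.
Qed.

Lemma sumcount A : all (fun a => a < 5) A ->
  sumn (map (fun v => count_mem v A) (iota 0 5)) = size A.
Proof.
elim: A => [|a A IH] //= /andP[Ha HA].
rewrite -(IH HA) /=.
by case: a Ha => [|[|[|[|[|]]]]] //= _; rewrite !add0n ?addn0 !addnA ?addn1 ?add1n //= ?addSn ?addnS.
Qed.

Section G.
Local Open Scope group_scope.
Variables (gT : finGroupType) (x y : gT) (s : nat).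
Hypothesis yx : y * x = x * y ^+ s.
Lemma L1 a : y ^+ a * x = x * y ^+ (a * s).
Proof.
elim: a => [|a IH]; first by rewrite mul0n !expg0 mul1g mulg1.
by rewrite expgS -mulgA IH mulgA yx -mulgA -expgD mulSn.
Qed.
Lemma L2 a j : y ^+ a * x ^+ j = x ^+ j * y ^+ (a * s ^ j).
Proof.
elim: j a => [|j IH] a; first by rewrite expn0 muln1 !expg0 mul1g mulg1.
by rewrite expgS mulgA L1 -mulgA IH mulgA expnS mulnA.
Qed.
Lemma L3 i l : \prod_(k <- l) (x ^+ i * y ^+ k) = x ^+ (i * size l) * y ^+ (F s i l).
Proof.
elim: l => [|a l IH]; first by rewrite big_nil muln0 !expg0 mulg1.
rewrite big_cons IH /= mulgA -(mulgA (x ^+ i)) L2 mulgA -expgD -mulgA -expgD.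
by rewrite mulnS.
Qed.
End G.

Lemma extract (gT : finGroupType) (x y : gT) i (S : seq gT) :
  #[y]%g = 5 -> all (fun g => g \in (x ^+ i *: <[y]>)%g) S ->
  exists A, S = map (fun k => x ^+ i * y ^+ k)%g A /\ all (fun a => a < 5) A.
Proof.
move=> Hy; elim: S => [|g S IH] /=; first by exists [::].
case/andP=> Hg /IH [A [-> HA]].
move: Hg; rewrite mem_lcoset => /cycleP [k Hk].
exists (k %% 5 :: A); split; last by rewrite /= HA ltn_pmod.
by rewrite /= -Hy expg_mod_order -Hk mulKVg.
Qed.

Theorem proposition2 (gT : finGroupType) (x y : gT) (s i : nat)
    (S : seq gT) :
  (s == 2) || (s == 3) ->
  #[x]%g = 4 -> #[y]%g = 5 -> (y * x = x * y ^+ s)%g ->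
  all (fun g => g \in <<[set x; y]>>%g) S ->
  size S = 7 ->
  (i == 1) || (i == 3) ->
  all (fun g => g \in (x ^+ i *: <[y]>)%g) S ->
  ~ prod1_free S.
Proof.
move=> Hs Hx Hy yx _ HS Hi Hall.
have [A [HSA HA]] := @extract _ x y i S Hy Hall.
rewrite HSA size_map in HS.
set t := s ^ i %% 5.
have Ht : (t == 2) || (t == 3).
  by rewrite /t; case/orP: Hs => /eqP->; case/orP: Hi => /eqP->.
set c := map (fun v => count_mem v A) (iota 0 5).
have cC : c \in C.
  rewrite mem_filter sumcount // HS eqxx mem_tup size_map size_iota eqxx !andTb.
  apply/allP => v /mapP [w _ ->]; rewrite -HS ltnS; exact: count_size.
have /andP[H2 H3] := allP comp c cC.
have : has (fits c) (W t) by case/orP: Ht => /eqP ->.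
case/hasP => l; rewrite mem_filter mem_tup => /andP[Hf /andP[/eqP Hsz Hl]] Hfit.
have [m _ Hm] : exists2 m : bitseq, size m = size A & perm_eq l (mask m A).
  apply/count_maskP => v; case: (ltnP v 5) => Hv.
    move/allP: Hfit => /(_ v); rewrite mem_iota Hv /= (nth_map 0) ?size_iota //.
    by rewrite nth_iota // add0n; apply.
  have -> : count_mem v l = 0.
    by apply/count_memPn/negP => /(allP Hl); rewrite ltnNge Hv.
  by [].
move=> Hfree; apply: Hfree.
exists m, (map (fun k => x ^+ i * y ^+ k)%g l); split; [|split].
- by rewrite HSA -map_mask -size_eq0 size_map -(perm_size Hm) Hsz.
- by rewrite HSA -map_mask; apply: perm_map; rewrite perm_sym.
- rewrite big_map (L3 _ _ _ _ yx) Hsz mulnC expgM -Hx expg_order expg1n mul1g.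
  by rewrite -expg_mod_order Hy F_mod -/t (eqP Hf) expg0.
Qed.
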